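(* Let $u(x,t)$ be a smooth solution of the Rosenau equation $$u_t + u_{xxxxt} + u_x + u u_x = 0,\qquad t>0,$$ which is $L$-periodic in $x$ for some $L>0$. Then the quantity $$\int_0^L \Big(\frac{1}{3}u^3 + u^2\Big)\,\mathrm{d}x$$ is independent of $t$.
   Context: All functions are smooth in $(x,t)$ and $L$-periodic in the spatial variable $x$, so boundary terms from integration by parts over one period vanish. Subscripts denote partial derivatives. *)

(* Defs.v *)
From Stdlib Require Import Reals.
From Coquelicot Require Import Coquelicot.
Open Scope R_scope.

Fixpoint Dx (n : nat) (u : R -> R -> R) : R -> R -> R :=
  match n with
  | O => u
  | S k => fun x t => Derive (fun y => Dx k u y t) x
  end.

Fixpoint Dt (m : nat) (u : R -> R -> R) : R -> R -> R :=
  match m with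
  | O => u
  | S k => fun x t => Derive (fun s => Dt k u x s) t
  end.

Definition smooth_on_halfplane (u : R -> R -> R) : Prop :=
  forall (n m : nat) (x t : R), 0 < t ->
    ex_derive (fun y => Dx n (Dt m u) y t) x /\
    ex_derive (fun s => Dx n (Dt m u) x s) t /\
    continuous (fun p : R * R => Dx n (Dt m u) (fst p) (snd p)) (x, t).

Definition periodic_x (L : R) (u : R -> R -> R) : Prop :=
  forall x t, 0 < t -> u (x + L) t = u x t.

Definition rosenau_solution (u : R -> R -> R) : Prop :=
  forall x t, 0 < t ->
    Dt 1 u x t + Dx 4 (Dt 1 u) x t + Dx 1 u x t + u x t * Dx 1 u x t = 0.

(* Main.v *)
From Pilot Require Import Defs.
From Stdlib Require Import Reals Lra.
From Coquelicot Require Import Coquelicot.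
Open Scope R_scope.
Import Pilot.Defs.

Lemma Derive_shift (g : R -> R) (L x : R) :
  Derive (fun y => g (y + L)) x = Derive g (x + L).
Proof.
  unfold Derive. f_equal. apply Lim_ext. intros h.
  replace (x + L + h) with (x + h + L) by ring. reflexivity.
Qed.

Lemma locally_pos (t : R) : 0 < t -> locally t (fun s => 0 < s).
Proof.
  intros Ht. exists (mkposreal t Ht). intros s Hs.
  change (Rabs (s - t) < t) in Hs. apply Rabs_lt_between' in Hs. simpl in Hs. lra.
Qed.

Lemma periodic_all (u : R -> R -> R) (L : R) :
  periodic_x L u -> forall (m n : nat) (x t : R), 0 < t ->
  Dx n (Dt m u) (x + L) t = Dx n (Dt m u) x t.
Proof.
  intros Hp m. induction m as [|m IHm]; intros n.
  - induction n as [|n IHn]; intros x t Ht.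
    + simpl. apply Hp; auto.
    + simpl. rewrite <- Derive_shift. apply Derive_ext. intros y. apply IHn; auto.
  - induction n as [|n IHn]; intros x t Ht.
    + simpl. apply Derive_ext_loc.
      apply filter_imp with (2 := locally_pos t Ht). intros s Hs.
      apply (IHm 0%nat x s Hs).
    + simpl. rewrite <- Derive_shift. apply Derive_ext. intros y. apply IHn; auto.
Qed.

Lemma cont_x (g : R -> R -> R) x t :
  continuous (fun p : R * R => g (fst p) (snd p)) (x, t) ->
  continuous (fun y => g y t) x.
Proof.
  intros H.
  apply (continuous_comp_2 (fun y => y) (fun _ => t) g x).
  - apply continuous_id.
  - apply continuous_const.
  - exact H.
Qed.

Lemma cont_2d_swap (g : R -> R -> R) x t :
  continuous (fun p : R * R => g (fst p) (snd p)) (x, t) ->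
  continuity_2d_pt (fun s y => g y s) t x.
Proof.
  intros H. apply continuity_2d_pt_filterlim in H.
  intros eps. destruct (H eps) as [d Hd]. exists d. intros a b Ha Hb.
  apply Hd; auto.
Qed.
Lemma G_deriv (u : R -> R -> R) t y : smooth_on_halfplane u -> 0 < t -> rosenau_solution u ->
  is_derive (fun x => -(u x t + (u x t)^2/2 + Dx 3 (Dt 1 u) x t)^2 - 2 * Dx 2 (Dt 1 u) x t * Dt 1 u x t + (Dx 1 (Dt 1 u) x t)^2) y
   (((u y t)^2 + 2 * u y t) * Dt 1 u y t).
Proof.
  intros Hs Ht Hr.
  pose proof (Hr y t Ht) as E.
  auto_derive.
  - repeat split.
    + exact (proj1 (Hs 0%nat 0%nat y t Ht)).
    + exact (proj1 (Hs 0%nat 0%nat y t Ht)).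
    + exact (proj1 (Hs 3%nat 1%nat y t Ht)).
    + exact (proj1 (Hs 2%nat 1%nat y t Ht)).
    + exact (proj1 (Hs 0%nat 1%nat y t Ht)).
    + exact (proj1 (Hs 1%nat 1%nat y t Ht)).
  - simpl in E.
    set (a4 := Derive (fun x : R => Derive (fun y0 : R => Derive (fun y1 : R => Derive (fun y2 : R => Derive (fun s : R => u y2 s) t) y1) y0) x) y) in *.
    set (a3 := Derive (fun y0 : R => Derive (fun y1 : R => Derive (fun y2 : R => Derive (fun s : R => u y2 s) t) y1) y0) y) in *.
    set (a2 := Derive (fun y1 : R => Derive (fun y2 : R => Derive (fun s : R => u y2 s) t) y1) y) in *.
    set (a1 := Derive (fun y2 : R => Derive (fun s : R => u y2 s) t) y) in *.
    set (a0 := Derive (fun s : R => u y s) t) in *.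
    set (b1 := Derive (fun x : R => u x t) y) in *.
    change (Dt 1 u y t) with a0.
    assert (H4 : a4 = - (a0 + b1 + u y t * b1)) by lra.
    rewrite H4. field.
Qed.

Lemma cont_q (a b : R -> R) x : continuous a x -> continuous b x ->
  continuous (fun y => (a y ^ 2 + 2 * a y) * b y) x.
Proof.
  intros Ha Hb.
  apply continuous_ext with (fun y => mult (plus (mult (a y) (a y)) (mult 2 (a y))) (b y)).
  { intros y. unfold mult, plus. simpl. ring. }
  apply (continuous_mult (K:=R_AbsRing)); auto. apply (continuous_plus (V:=R_NormedModule)); apply (continuous_mult (K:=R_AbsRing)); auto.
  apply continuous_const.
Qed.

Lemma cont_c (a : R -> R) x : continuous a x ->
  continuous (fun y => / 3 * a y ^ 3 + a y ^ 2) x.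
Proof.
  intros Ha.
  apply continuous_ext with (fun y => plus (mult (/3) (mult (a y) (mult (a y) (a y)))) (mult (a y) (a y))).
  { intros y. unfold mult, plus. simpl. ring. }
  apply (continuous_plus (V:=R_NormedModule)).
  - apply (continuous_mult (K:=R_AbsRing)). apply continuous_const.
    apply (continuous_mult (K:=R_AbsRing)); auto.
    apply (continuous_mult (K:=R_AbsRing)); auto.
  - apply (continuous_mult (K:=R_AbsRing)); auto.
Qed.

Lemma space_int (u : R -> R -> R) (L t : R) :
  smooth_on_halfplane u -> periodic_x L u -> rosenau_solution u -> 0 < t ->
  RInt (fun y => ((u y t)^2 + 2 * u y t) * Dt 1 u y t) 0 L = 0.
Proof.
  intros Hs Hp Hr Ht.
  set (G := fun x => -(u x t + (u x t)^2/2 + Dx 3 (Dt 1 u) x t)^2 - 2 * Dx 2 (Dt 1 u) x t * Dt 1 u x t + (Dx 1 (Dt 1 u) x t)^2).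
  assert (HI : is_RInt (fun y => ((u y t)^2 + 2 * u y t) * Dt 1 u y t) 0 L (minus (G L) (G 0))).
  { apply (is_RInt_derive (V:=R_CompleteNormedModule) G).
    - intros x _. apply G_deriv; auto.
    - intros x _. apply cont_q.
      + apply (cont_x (Dx 0 (Dt 0 u))). exact (proj2 (proj2 (Hs 0%nat 0%nat x t Ht))).
      + apply (cont_x (Dx 0 (Dt 1 u))). exact (proj2 (proj2 (Hs 0%nat 1%nat x t Ht))). }
  rewrite (is_RInt_unique (V:=R_CompleteNormedModule) _ _ _ _ HI).
  assert (HG : G L = G 0).
  { unfold G. replace L with (0 + L) at 1 2 3 4 5 6 by ring.
    pose proof (periodic_all u L Hp) as P.
    assert (A0 : Dt 1 u (0+L) t = Dt 1 u 0 t) by exact (P 1%nat 0%nat 0 t Ht).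
    rewrite (Hp 0 t Ht), (P 1%nat 3%nat 0 t Ht), (P 1%nat 2%nat 0 t Ht), A0,
      (P 1%nat 1%nat 0 t Ht). reflexivity. }
  rewrite HG. unfold minus, plus, opp. simpl. ring.
Qed.

Lemma dF (u : R -> R -> R) y s : smooth_on_halfplane u -> 0 < s ->
  Derive (fun z => / 3 * (u y z) ^ 3 + (u y z) ^ 2) s = ((u y s)^2 + 2 * u y s) * Dt 1 u y s.
Proof.
  intros Hs Hps. apply is_derive_unique. auto_derive.
  - repeat split; exact (proj1 (proj2 (Hs 0%nat 0%nat y s Hps))).
  - simpl. field.
Qed.

Lemma time_deriv (u : R -> R -> R) (L t : R) :
  smooth_on_halfplane u -> 0 < t ->
  is_derive (fun s => RInt (fun y => / 3 * (u y s) ^ 3 + (u y s) ^ 2) 0 L) t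
    (RInt (fun y => ((u y t)^2 + 2 * u y t) * Dt 1 u y t) 0 L).
Proof.
  intros Hs Ht.
  assert (E : RInt (fun y => ((u y t)^2 + 2 * u y t) * Dt 1 u y t) 0 L =
              RInt (fun y => Derive (fun z => / 3 * (u y z) ^ 3 + (u y z) ^ 2) t) 0 L).
  { apply RInt_ext. intros y _. rewrite dF; auto. }
  rewrite E.
  apply (is_derive_RInt_param (fun s y => / 3 * (u y s) ^ 3 + (u y s) ^ 2) 0 L t).
  - apply filter_imp with (2 := locally_pos t Ht). intros s Hps y _.
    auto_derive. repeat split; exact (proj1 (proj2 (Hs 0%nat 0%nat y s Hps))).
  - intros y _.
    apply continuity_2d_pt_ext_loc with (fun a b => ((u b a)^2 + 2 * u b a) * Dt 1 u b a).
    + exists (mkposreal t Ht). intros a b Ha _. simpl in Ha.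
      apply Rabs_lt_between' in Ha. rewrite dF; auto. lra.
    + apply continuity_2d_pt_ext with (fun a b => ((u b a) * (u b a) + 2 * u b a) * Dt 1 u b a).
      { intros a b. ring. }
      apply continuity_2d_pt_mult.
      * apply continuity_2d_pt_plus.
        -- apply continuity_2d_pt_mult; apply (cont_2d_swap (Dx 0 (Dt 0 u)));
           exact (proj2 (proj2 (Hs 0%nat 0%nat y t Ht))).
        -- apply continuity_2d_pt_mult. apply continuity_2d_pt_const.
           apply (cont_2d_swap (Dx 0 (Dt 0 u))); exact (proj2 (proj2 (Hs 0%nat 0%nat y t Ht))).
      * apply (cont_2d_swap (Dx 0 (Dt 1 u))); exact (proj2 (proj2 (Hs 0%nat 1%nat y t Ht))).
  - apply filter_imp with (2 := locally_pos t Ht). intros s Hps.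
    apply (ex_RInt_continuous (V:=R_CompleteNormedModule)). intros y _.
    apply (cont_c (fun y => u y s)).
    apply (cont_x (Dx 0 (Dt 0 u))). exact (proj2 (proj2 (Hs 0%nat 0%nat y s Hps))).
Qed.

Theorem mainTheorem4 (u : R -> R -> R) (L : R) :
  0 < L ->
  smooth_on_halfplane u ->
  periodic_x L u ->
  rosenau_solution u ->
  forall t1 t2 : R, 0 < t1 -> 0 < t2 ->
    RInt (fun x => / 3 * (u x t1) ^ 3 + (u x t1) ^ 2) 0 L =
    RInt (fun x => / 3 * (u x t2) ^ 3 + (u x t2) ^ 2) 0 L.
Proof.
  intros HL Hs Hp Hr t1 t2 H1 H2.
  set (En := fun s => RInt (fun x => / 3 * (u x s) ^ 3 + (u x s) ^ 2) 0 L).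
  assert (Hd : forall s, 0 < s -> is_derive En s 0).
  { intros s Hps. pose proof (time_deriv u L s Hs Hps) as D.
    rewrite (space_int u L s Hs Hp Hr Hps) in D. exact D. }
  assert (Hm : 0 < Rmin t1 t2) by (apply Rmin_glb_lt; auto).
  destruct (MVT_gen En t1 t2 (fun _ => 0)) as [c [_ Hc]].
  - intros x Hx. apply Hd. simpl in Hx. lra.
  - intros x Hx. simpl in Hx. apply continuity_pt_filterlim.
    apply (ex_derive_continuous (K:=R_AbsRing) (V:=R_NormedModule)). exists 0. apply Hd. lra.
  - change (En t1 = En t2). lra.
Qed.
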